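(* (a) For every integer $n\ge 2$, $\chi(H_2(n,2))=2^{n-1}$. (b) Let $q\ge 3$ and $n\ge 2$ be integers and let $d$ be an integer with $d>0$ and $d\in\{n-q+2,\ldots,n\}$. Then $\chi(H_q(n,d))=q^{n-d+1}$, and every proper $q^{n-d+1}$-coloring of $H_q(n,d)$ is even.
   Context: $\mathbb{Z}_q=\mathbb{Z}/q\mathbb{Z}$; for $x,y\in\mathbb{Z}_q^n$, $\mathrm{d}(x,y)=|\{i: x_i\neq y_i\}|$ is the Hamming distance. $H_q(n,d)$ is the simple undirected graph with vertex set $\mathbb{Z}_q^n$ in which $x,y$ are adjacent iff $\mathrm{d}(x,y)\ge d$. $\chi$ denotes the chromatic number. A coloring is called even if all its color classes (sets of vertices with the same color) have the same cardinality. *)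

(* Defs.v *)
From mathcomp Require Import all_boot.
Set Implicit Arguments. Unset Strict Implicit. Unset Printing Implicit Defensive.

Definition word (q n : nat) := {ffun 'I_n -> 'I_q}.

Definition hdist (q n : nat) (x y : word q n) : nat := #|[set i | x i != y i]|.

(* adjacency in H_q(n,d): x,y adjacent iff d(x,y) >= d (simple graph: d>0 excludes loops) *)
Definition hadj (q n d : nat) (x y : word q n) : bool := (d <= hdist x y) && (x != y).

Definition proper_coloring (q n d k : nat) (f : word q n -> 'I_k) : Prop :=
  forall x y : word q n, hadj d x y -> f x <> f y.

Definition chi_is (q n d m : nat) : Prop :=
  (exists f : word q n -> 'I_m, proper_coloring d f) /\
  (forall k, k < m -> forall f : word q n -> 'I_k, ~ proper_coloring d f).

Definition even_coloring (q n k : nat) (f : word q n -> 'I_k) : Prop :=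
  forall c1 c2 : 'I_k, #|[set x | f x == c1]| = #|[set x | f x == c2]|.

(* Main.v *)
Require Import Defs.
From mathcomp Require Import all_boot all_order all_algebra.
From mathcomp Require Import zify ring lra.
Import GRing.Theory Num.Theory Order.TTheory.

Local Open Scope ring_scope.

Definition Tq (q t w : nat) : rat := \sum_(k < t) ('C(w, k))%:R * (- q%:R) ^+ k.
Definition Uq (q t w : nat) : rat := (q%:R - 1) ^+ w - (-1) ^+ w * Tq q t w.

Lemma Tq_rec q t w : (0 < t)%N ->
  Tq q t w.+1 = (1 - q%:R) * Tq q t w - ('C(w, t.-1))%:R * (- q%:R) ^+ t.
Proof.
case: t => // t _ /=; rewrite /Tq.
set x : rat := - q%:R.
set T := \sum_(k < t.+1) ('C(w, k))%:R * x ^+ k.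
have h1 : T = 1 + \sum_(i < t) ('C(w, i.+1))%:R * x ^+ i.+1.
  by rewrite /T big_ord_recl /= bin0 expr0 mulr1.
have h2 : T = \sum_(i < t) ('C(w, i))%:R * x ^+ i + ('C(w, t))%:R * x ^+ t.
  by rewrite /T big_ord_recr.
rewrite big_ord_recl /= bin0 expr0 mulr1.
under eq_bigr => i _ do rewrite /bump /= binS natrD mulrDl.
rewrite big_split /=.
have -> : \sum_(i < t) ('C(w, i))%:R * x ^+ i.+1 = x * \sum_(i < t) ('C(w, i))%:R * x ^+ i.
  rewrite mulr_sumr; apply: eq_bigr => i _; rewrite exprS; ring.
have hA : \sum_(i < t) ('C(w, i.+1))%:R * x ^+ i.+1 = T - 1 by rewrite h1; ring.
have hB : \sum_(i < t) ('C(w, i))%:R * x ^+ i = T - ('C(w, t))%:R * x ^+ t by rewrite h2; ring.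
rewrite hA hB /x exprS; ring.
Qed.

Lemma Uq_rec q t w : (0 < t)%N ->
  Uq q t w.+1 = (q%:R - 1) * Uq q t w - (-1) ^+ (w + t) * ('C(w, t.-1))%:R * (q%:R) ^+ t.
Proof.
move=> t0; rewrite /Uq Tq_rec // !exprS exprD (exprNn (q%:R)); ring.
Qed.

Lemma Tq0 q t : (0 < t)%N -> Tq q t 0 = 1.
Proof.
case: t => // t _; rewrite /Tq big_ord_recl /= bin0 expr0 mulr1 big1 ?addr0 //.
by move=> i _; rewrite bin0n /= mul0r.
Qed.

Lemma Uq_small q t w : (0 < t)%N -> (w < t)%N -> Uq q t w = 0.
Proof.
move=> t0; elim: w => [|w IH] lt.
  by rewrite /Uq Tq0 // !expr0 mul1r subrr.
rewrite Uq_rec // IH; last by apply: ltnW.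
rewrite bin_small; last by rewrite -ltnS prednK.
by rewrite !(mulr0, mul0r) subr0.
Qed.

Lemma bin_step_le t u s : (0 < t)%N -> (t <= s)%N ->
  ('C(t + u, t.-1) <= s * 'C((t + u).-1, t.-1))%N.
Proof.
move=> t0 ts.
have h := mul_bin_down (t + u) t.-1.
have e : (t + u - t.-1 = u.+1)%N by case: t t0 {ts h} => // t _; lia.
rewrite e in h.
rewrite -(leq_pmul2l (ltn0Sn u)) -h mulnA.
rewrite leq_mul2r; apply/orP; right; nia.
Qed.

Lemma Uq_t q t : (0 < t)%N -> Uq q t t = (q%:R) ^+ t.
Proof.
case: t => // t _; rewrite Uq_rec // Uq_small // mulr0 sub0r binn mulr1 /=.
rewrite -signr_odd addnS /= oddD addbb /= expr1; ring.
Qed.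

Lemma Uq_inv q t u : (0 < t)%N -> (t < q)%N ->
  0 <= Uq q t (t + u) /\ (~~ odd u -> ('C((t + u).-1, t.-1))%:R * (q%:R) ^+ t <= Uq q t (t + u)).
Proof.
move=> t0 tq.
have s0 : (q%:R - 1 : rat) = (q.-1)%:R.
  by case: q tq => //= q _; rewrite -addn1 natrD addrK.
have qpos : (0 : rat) <= (q%:R) ^+ t by apply: exprn_ge0; apply: ler0n.
elim: u => [|u [IH1 IH2]].
  rewrite addn0 Uq_t //; split => // _.
  by rewrite -subn1 binn mul1r.
rewrite addnS Uq_rec // -signr_odd.
have -> : odd (t + u + t) = odd u by rewrite addnAC addnn oddD odd_double.
have tq' : (t <= q.-1)%N by lia.
have hb := @bin_step_le t u q.-1 t0 tq'.
case ou: (odd u) => /=.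
  rewrite expr1 !mulN1r !mulNr opprK.
  have h0 : 0 <= (q%:R - 1) * Uq q t (t + u) by rewrite s0 mulr_ge0 // ler0n.
  split; first by rewrite addr_ge0 // mulr_ge0 // ler0n.
  by rewrite lerDr.
rewrite expr0 mul1r; split; last by rewrite ou.
rewrite subr_ge0.
have h := IH2 (negbT ou).
apply: (le_trans _ (_ : (q%:R - 1) * ('C((t + u).-1, t.-1))%:R * (q%:R) ^+ t <= _)).
  rewrite s0 -natrM ler_wpM2r // ler_nat; apply: hb; lia.
rewrite -mulrA ler_wpM2l // s0 ler0n //.
Qed.

Definition rr (q : nat) : rat := - (q%:R - 1)^-1.
Definition wk (q t k : nat) : rat := (- q%:R) ^+ k * ((q%:R) ^+ (t - k) - 1).
Definition Lq (q t w : nat) : rat := \sum_(k < t) wk q t k * ('C(w, k))%:R.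
Definition lam (q t w : nat) : rat := rr q ^+ w * Lq q t w.

Lemma wk_step q t k : (k < t)%N -> wk q t k + wk q t k.+1 = (q%:R - 1) * (- q%:R) ^+ k.
Proof.
move=> kt; rewrite /wk.
have -> : (t - k = (t - k.+1).+1)%N by lia.
rewrite !exprS; ring.
Qed.

Lemma wk_t q t : wk q t t = 0.
Proof. by rewrite /wk subnn expr0 subrr mulr0. Qed.

Lemma Lq_S q t w : Lq q t w.+1 = (q%:R - 1) * Tq q t w.
Proof.
case: t => [|t]; first by rewrite /Lq /Tq !big_ord0 mulr0.
rewrite /Lq /Tq.
have e1 : \sum_(k < t.+1) wk q t.+1 k * ('C(w.+1, k))%:R =
   \sum_(k < t.+1) wk q t.+1 k * ('C(w, k))%:R + \sum_(k < t) wk q t.+1 k.+1 * ('C(w, k))%:R.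
  rewrite big_ord_recl [X in _ = X + _]big_ord_recl !bin0 -addrA; congr (_ + _).
  rewrite -big_split /=; apply: eq_bigr => i _; rewrite /bump /= binS natrD; ring.
have e2 : \sum_(k < t) wk q t.+1 k.+1 * ('C(w, k))%:R =
   \sum_(k < t.+1) wk q t.+1 k.+1 * ('C(w, k))%:R.
  by rewrite big_ord_recr /= wk_t mul0r addr0.
rewrite e1 e2 -big_split /= mulr_sumr; apply: eq_bigr => i _.
rewrite -mulrDl wk_step //; ring.
Qed.

Lemma nu_formula q t w : (1 < q)%N ->
  1 + lam q t w.+1 = Uq q t w * ((q%:R - 1) ^+ w)^-1.
Proof.
move=> q1.
have s0 : (q%:R - 1 : rat) != 0.
  by rewrite subr_eq0 pnatr_eq1 neq_ltn q1 orbT.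
rewrite /lam Lq_S /Uq /rr.
have -> : (- (q%:R - 1)^-1 : rat) = (-1) * (q%:R - 1)^-1 by rewrite mulN1r.
rewrite exprMn exprS exprVn exprS invfM.
have sw : ((q%:R - 1) ^+ w : rat) != 0 by rewrite expf_neq0.
field; by rewrite sw s0.
Qed.

Lemma nu_ge0 q t w : (0 < t)%N -> (t < q)%N -> (0 < w)%N -> 0 <= 1 + lam q t w.
Proof.
move=> t0 tq; case: w => // w _.
rewrite nu_formula; last by lia.
apply: mulr_ge0; last first.
  rewrite invr_ge0 exprn_ge0 // subr_ge0 ler1n; lia.
case: (ltnP w t) => [wt|tw]; first by rewrite Uq_small.
have -> : w = (t + (w - t))%N by lia.
by case: (@Uq_inv q t (w - t) t0 tq).
Qed.

Lemma nu0 q t : (0 < t)%N -> 1 + lam q t 0 = (q%:R) ^+ t.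
Proof.
case: t => // t _; rewrite /lam /Lq expr0 mul1r big_ord_recl big1 ?addr0.
  by rewrite bin0 /wk expr0 mul1r subn0 mulr1; ring.
by move=> i _; rewrite bin0n /= mulr0.
Qed.

Set Implicit Arguments. Unset Strict Implicit. Unset Printing Implicit Defensive.

Definition iq (q : nat) : rat := (q%:R)^-1.
Definition ee q (a b : 'I_q) : rat := (a == b)%:R - iq q.
Definition pS q n (S : {set 'I_n}) (x y : word q n) : rat :=
  \prod_(i < n) (if i \in S then ee (x i) (y i) else iq q).

Lemma sum_delta (T : finType) (b : T) (F : T -> rat) :
  \sum_c (c == b)%:R * F c = F b.
Proof.
rewrite (bigD1 b) //= eqxx mul1r big1 ?addr0 // => c /negbTE ->.
by rewrite mul0r.
Qed.

Lemma sum_subsets (I : finType) (u v : I -> rat) :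
  \sum_(S : {set I}) \prod_i (if i \in S then u i else v i) = \prod_i (u i + v i).
Proof. by rewrite bigA_distr. Qed.

Lemma sum_pS q n (x y : word q n) :
  \sum_(S : {set 'I_n}) pS S x y = (x == y)%:R.
Proof.
rewrite /pS sum_subsets.
under eq_bigr => i _ do rewrite /ee subrK.
case: (x =P y) => [->|nxy].
  by rewrite big1 // => i _; rewrite eqxx.
have [i hi] : exists i, x i != y i.
  apply/existsP; apply: contraT; rewrite negb_exists => /forallP h.
  by case: nxy; apply/ffunP => i; apply/eqP; move: (h i); rewrite negbK.
by rewrite (bigD1 i) //= (negbTE hi) mul0r.
Qed.

Lemma pS_sym q n S (x y : word q n) : pS S x y = pS S y x.
Proof. by apply: eq_bigr => i _; rewrite /ee eq_sym. Qed.

Lemma ee_idem q (a b : 'I_q) : (0 < q)%N -> \sum_c ee a c * ee c b = ee a b.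
Proof.
move=> q0.
have h1 : \sum_(c : 'I_q) ee c b = 0.
  rewrite /ee sumrB sumr_const card_ord.
  under eq_bigr => c _ do rewrite -(mulr1 (_ %:R)).
  rewrite sum_delta /iq -[X in _ - X]mulr_natl mulfV ?subrr //.
  by rewrite pnatr_eq0 -lt0n.
under eq_bigr => c _ do rewrite {1}/ee mulrBl.
rewrite sumrB -mulr_sumr h1 mulr0 subr0.
under eq_bigr => c _ do rewrite eq_sym.
by rewrite sum_delta.
Qed.

Lemma pS_idem q n S (x y : word q n) : (0 < q)%N ->
  \sum_(z : word q n) pS S x z * pS S z y = pS S x y.
Proof.
move=> q0; rewrite /pS.
under eq_bigr => z _ do rewrite -big_split /=.
rewrite -(bigA_distr_bigA (fun i c => (if i \in S then ee (x i) c else iq q) *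
                                      (if i \in S then ee c (y i) else iq q))) /=.
apply: eq_bigr => i _; case: (i \in S); first exact: ee_idem.
rewrite sumr_const card_ord /iq -[X in X = _](mulr_natr (q%:R^-1 / q%:R)) divfK //.
by rewrite pnatr_eq0 -lt0n.
Qed.

Definition WS q n (F : {set word q n}) (S : {set 'I_n}) : rat :=
  \sum_(x in F) \sum_(y in F) pS S x y.

Lemma WS_ge0 q n (F : {set word q n}) S : (0 < q)%N -> 0 <= WS F S.
Proof.
move=> q0.
have -> : WS F S = \sum_(z : word q n) (\sum_(x in F) pS S x z) ^+ 2.
  rewrite /WS.
  transitivity (\sum_(x in F) \sum_(y in F) \sum_(z : word q n) pS S x z * pS S z y).
    by apply: eq_bigr => x _; apply: eq_bigr => y _; rewrite pS_idem.
  under eq_bigr => x _ do rewrite exchange_big.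
  rewrite exchange_big; apply: eq_bigr => z _.
  rewrite expr2 mulr_suml; apply: eq_bigr => x _.
  rewrite mulr_sumr; apply: eq_bigr => y _; by rewrite (pS_sym S z y).
by apply: sumr_ge0 => z _; apply: sqr_ge0.
Qed.

Lemma sumS_WS q n (F : {set word q n}) :
  \sum_(S : {set 'I_n}) WS F S = (#|F|)%:R.
Proof.
rewrite /WS exchange_big.
under eq_bigr => x _ do rewrite exchange_big.
transitivity (\sum_(x in F) (1 : rat)); last by rewrite sumr_const.
apply: eq_bigr => x xF; under eq_bigr => y _ do rewrite sum_pS.
rewrite (bigD1 x) //= eqxx big1 ?addr0 // => y /andP[_].
by rewrite eq_sym => /negbTE ->.
Qed.

Lemma WS0 q n (F : {set word q n}) :
  WS F set0 = (#|F|)%:R ^+ 2 * iq q ^+ n.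
Proof.
have hp : forall x y : word q n, pS set0 x y = iq q ^+ n.
  move=> x y; rewrite /pS (eq_bigr (fun=> iq q)) ?prodr_const ?card_ord //.
  by move=> i _; rewrite in_set0.
rewrite /WS.
under eq_bigr => x _ do under eq_bigr => y _ do rewrite hp.
rewrite !sumr_const -mulrnA -(mulr_natl (iq q ^+ n) (#|F| * #|F|)) natrM expr2.
by [].
Qed.

Lemma prod_if_scale (I : finType) (S : {set I}) (c : rat) (a b : I -> rat) :
  \prod_i (if i \in S then c * a i else b i) =
  c ^+ #|S| * \prod_i (if i \in S then a i else b i).
Proof.
transitivity (\prod_i ((if i \in S then c else 1) * (if i \in S then a i else b i))).
  by apply: eq_bigr => i _; case: (i \in S); rewrite ?mul1r.
by rewrite big_split /= -big_mkcond prodr_const.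
Qed.

Lemma bin_as_sum n k (S : {set 'I_n}) :
  ('C(#|S|, k))%:R = \sum_(K : {set 'I_n}) ((K \subset S) && (#|K| == k))%:R :> rat.
Proof.
rewrite -cards_draws -sum1_card natr_sum big_mkcond /=.
by apply: eq_bigr => K _; rewrite inE; case: (_ && _).
Qed.

Lemma sum_superset (I : finType) (K : {set I}) (a b : I -> rat) :
  \sum_(S : {set I}) (K \subset S)%:R * \prod_i (if i \in S then a i else b i) =
  \prod_i (a i + (if i \in K then 0 else b i)).
Proof.
rewrite -sum_subsets; apply: eq_bigr => S _.
case: (boolP (K \subset S)) => h.
  rewrite mul1r; apply: eq_bigr => i _.
  case: (boolP (i \in S)) => // iS; case: (boolP (i \in K)) => // iK.
  by move: iS; rewrite (subsetP h i iK).
case/subsetPn: h => i iK iS.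
by rewrite mul0r (bigD1 i) //= (negbTE iS) iK mul0r.
Qed.

Lemma kernel_k q n t k (x y : word q n) : (1 < q)%N -> (k < t)%N ->
  (t <= #|[set i | x i == y i]|)%N ->
  \sum_(S : {set 'I_n}) rr q ^+ #|S| * ('C(#|S|, k))%:R * pS S x y = 0.
Proof.
move=> q1 kt tA.
under eq_bigr => S _ do rewrite mulrAC /pS -prod_if_scale bin_as_sum mulr_sumr.
rewrite exchange_big /=; apply: big1 => K _.
case e: (#|K| == k); last first.
  by apply: big1 => S _; rewrite andbF mulr0.
under eq_bigr => S _ do rewrite andbT mulrC.
rewrite sum_superset.
have : ~~ ([set i | x i == y i] \subset K).
  apply/negP => /subset_leq_card; rewrite (eqP e); lia.
case/subsetPn => i; rewrite inE => /eqP xy iK.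
rewrite (bigD1 i) //= (negbTE iK).
have -> : rr q * ee (x i) (y i) + iq q = 0.
  rewrite /rr /ee /iq xy eqxx.
  have q0 : (q%:R : rat) != 0 by rewrite pnatr_eq0; lia.
  have q1' : (q%:R - 1 : rat) != 0 by rewrite subr_eq0 pnatr_eq1; lia.
  rewrite (_ : (true%:R : rat) = 1) //.
  by field; rewrite q0 q1'.
by rewrite mul0r.
Qed.

Lemma kernel_lam q n t (x y : word q n) : (1 < q)%N ->
  (t <= #|[set i | x i == y i]|)%N ->
  \sum_(S : {set 'I_n}) lam q t #|S| * pS S x y = 0.
Proof.
move=> q1 tA.
transitivity (\sum_(k < t) wk q t k *
   \sum_(S : {set 'I_n}) rr q ^+ #|S| * ('C(#|S|, k))%:R * pS S x y).
  rewrite /lam /Lq.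
  under eq_bigr => S _ do rewrite mulr_sumr mulr_suml.
  rewrite exchange_big /=; apply: eq_bigr => k _.
  by rewrite mulr_sumr; apply: eq_bigr => S _; ring.
by apply: big1 => k _; rewrite (kernel_k q1 (ltn_ord k) tA) mulr0.
Qed.

Lemma alpha_bound q n t (F : {set word q n}) : (0 < t)%N -> (t < q)%N ->
  (forall x y, x \in F -> y \in F -> (t <= #|[set i | x i == y i]|)%N) ->
  (#|F| * q ^ t <= q ^ n)%N.
Proof.
move=> t0 tq hF.
have q1 : (1 < q)%N by lia.
have key : \sum_(S : {set 'I_n}) (1 + lam q t #|S|) * WS F S = (#|F|)%:R.
  under eq_bigr => S _ do rewrite mulrDl mul1r.
  rewrite big_split /= sumS_WS.
  suff -> : \sum_(S : {set 'I_n}) lam q t #|S| * WS F S = 0 by rewrite addr0.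
  have e : forall S : {set 'I_n}, lam q t #|S| * WS F S =
      \sum_(x in F) \sum_(y in F) lam q t #|S| * pS S x y.
    by move=> S; rewrite /WS mulr_sumr; apply: eq_bigr => x _; rewrite mulr_sumr.
  under eq_bigr => S _ do rewrite e.
  rewrite exchange_big /=; apply: big1 => x xF.
  rewrite exchange_big /=; apply: big1 => y yF.
  exact: kernel_lam q1 (hF x y xF yF).
have lower : (q%:R) ^+ t * (WS F set0) <= (#|F|)%:R.
  rewrite -key (bigD1 set0) //= cards0 nu0 // lerDl.
  apply: sumr_ge0 => S hS; apply: mulr_ge0; last by apply: WS_ge0; lia.
  by apply: nu_ge0 => //; rewrite card_gt0.
move: lower; rewrite WS0 /iq exprVn.
have qn : (0 : rat) < (q%:R) ^+ n by apply: exprn_gt0; rewrite ltr0n; lia.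
rewrite mulrA ler_pdivrMr // -!natrX -!natrM ler_nat.
case: (posnP #|F|) => [-> //|fpos].
move=> h; rewrite -(leq_pmul2l fpos); move: h; rewrite mulnA.
by rewrite mulnC.
Qed.

Local Close Scope ring_scope.

Lemma agr_hdist q n (x y : word q n) :
  #|[set i | x i == y i]| + hdist x y = n.
Proof.
rewrite /hdist -[RHS](card_ord n) -(cardsC [set i | x i == y i]); congr (_ + _).
by apply: eq_card => i; rewrite !inE.
Qed.

Lemma card_word q n : #|word q n| = q ^ n.
Proof. by rewrite /word card_ffun !card_ord. Qed.

Lemma sum_classes q n k (f : word q n -> 'I_k) :
  \sum_(c : 'I_k) #|[set x | f x == c]| = q ^ n.
Proof.
rewrite -card_word.
transitivity (\sum_(c : 'I_k) \sum_(x : word q n) (f x == c : nat)).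
  apply: eq_bigr => c _; rewrite -sum1_card big_mkcond /=.
  by apply: eq_bigr => x _; rewrite inE; case: (f x == c).
rewrite exchange_big /= -sum1_card; apply: eq_bigr => x _.
rewrite (bigD1 (f x)) //= eqxx big1 // => c; rewrite eq_sym => /negbTE ->.
by [].
Qed.

Lemma class_bound q n d k (f : word q n -> 'I_k) (c : 'I_k) :
  proper_coloring d f -> 0 < d -> d <= n -> n + 2 <= q + d ->
  #|[set x | f x == c]| * q ^ (n - d + 1) <= q ^ n.
Proof.
move=> pf d0 dn nq.
apply: alpha_bound; [lia | lia |].
move=> x y; rewrite !inE => /eqP fx /eqP fy.
case: (x =P y) => [->|nxy].
  have := agr_hdist y y.
  have : hdist y y = 0.
    by rewrite /hdist; apply: eq_card0 => i; rewrite inE eqxx.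
  move=> ->; rewrite addn0 => ->; move: d0; lia.
have : ~~ hadj d x y.
  by apply/negP => /pf; rewrite fx fy.
rewrite /hadj negb_and; case/orP => [|]; last by move/negP; case; apply/eqP.
have := agr_hdist x y.
rewrite -ltnNge; move: (hdist x y) (#|[set i | x i == y i]|) => h a; lia.
Qed.

Lemma prefix_coloring q n m d : m <= n -> n < m + d ->
  exists f : word q n -> 'I_(q ^ m), proper_coloring d f.
Proof.
move=> mn nmd.
have e : #|{ffun 'I_m -> 'I_q}| = q ^ m by rewrite card_ffun !card_ord.
pose pre (x : word q n) : {ffun 'I_m -> 'I_q} := [ffun i => x (widen_ord mn i)].
exists (fun x => cast_ord e (enum_rank (pre x))).
move=> x y /andP [dh _] /cast_ord_inj /enum_rank_inj hp.
have sub : [set widen_ord mn i | i : 'I_m] \subset [set i | x i == y i].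
  apply/subsetP => j /imsetP [i _ ->]; rewrite inE.
  by move: (congr1 (fun g : {ffun 'I_m -> 'I_q} => g i) hp); rewrite /pre !ffunE => ->.
have := subset_leq_card sub.
rewrite card_imset; last by move=> a b /(congr1 val) /= /val_inj.
rewrite card_ord.
have := agr_hdist x y; lia.
Qed.

Lemma binary_class n (C : {set word 2 n}) :
  (forall x y, x \in C -> y \in C -> x != y -> hdist x y <= 1) -> #|C| <= 2.
Proof.
move=> H.
pose par (x : word 2 n) : bool := odd (\sum_i (x i : nat)).
have inj : {in C &, injective par}.
  move=> x y xC yC hp; apply/eqP; apply: contraT => nxy.
  have h1 := H x y xC yC nxy.
  have [i hi] : exists i, x i != y i.
    apply/existsP; apply: contraT; rewrite negb_exists => /forallP h.
    by move/negP: nxy; case; apply/eqP/ffunP => i; apply/eqP; move: (h i); rewrite negbK.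
  have h0 : 0 < hdist x y by rewrite /hdist card_gt0; apply/set0Pn; exists i; rewrite inE.
  have /cards1P [j hj] : hdist x y == 1 by rewrite eqn_leq h1 h0.
  have ij : i = j by apply/set1P; rewrite -hj inE.
  subst j.
  have off : forall k, k != i -> x k = y k.
    move=> k ki; apply/eqP; apply: contraT => nk.
    have : k \in [set i] by rewrite -hj inE.
    by move/set1P => kE; rewrite kE eqxx in ki.
  move: hp; rewrite /par (bigD1 i) //= [X in _ = odd X](bigD1 i) //=.
  rewrite (eq_bigr (fun k => (y k : nat))); last by move=> k /off ->.
  rewrite !oddD; move: hi; case: (x i) => [[|[|a]] ?] //; case: (y i) => [[|[|b]] ?] //=.
  - by move=> _; case: (odd _).
  - by move=> _; case: (odd _).
rewrite -(card_in_imset inj).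
by apply: leq_trans (max_card _) _; rewrite card_bool.
Qed.

Theorem corollary3p5 :
  (forall n : nat, 2 <= n -> chi_is 2 n 2 (2 ^ n.-1)) /\
  (forall q n d : nat, 3 <= q -> 2 <= n -> 0 < d -> n + 2 <= q + d -> d <= n ->
     chi_is q n d (q ^ (n - d + 1)) /\
     (forall f : word q n -> 'I_(q ^ (n - d + 1)),
        proper_coloring d f -> even_coloring f)).
Proof.
split.
  move=> n n2; split.
    by apply: prefix_coloring; lia.
  move=> k lt f pf.
  have hc : forall c : 'I_k, #|[set x | f x == c]| <= 2.
    move=> c; apply: binary_class => x y; rewrite !inE => /eqP fx /eqP fy nxy.
    have : ~~ hadj 2 x y by apply/negP => /pf; rewrite fx fy.
    by rewrite /hadj nxy andbT -ltnNge.
  have := sum_classes f.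
  have : \sum_(c : 'I_k) #|[set x | f x == c]| <= \sum_(c : 'I_k) 2 by apply: leq_sum => c _; apply: hc.
  rewrite sum_nat_const card_ord.
  have : 2 ^ n = 2 * 2 ^ n.-1 by rewrite -expnS prednK //; lia.
  lia.
move=> q n d q3 n2 d0 nq dn.
have qpos : 0 < q ^ n by rewrite expn_gt0; lia.
split; first split.
- by apply: prefix_coloring; lia.
- move=> k lt f pf.
  have := sum_classes f.
  have : \sum_(c : 'I_k) #|[set x | f x == c]| * q ^ (n - d + 1) <= \sum_(c : 'I_k) q ^ n.
    by apply: leq_sum => c _; apply: class_bound.
  rewrite -big_distrl /= sum_nat_const card_ord => h1 h2.
  rewrite h2 mulnC leq_pmul2r // in h1.
  lia.
- move=> f pf c1 c2.
  set t := n - d + 1.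
  have tpos : 0 < q ^ t by rewrite expn_gt0; lia.
  have hb : forall c, #|[set x | f x == c]| * q ^ t <= q ^ n.
    by move=> c; apply: class_bound.
  have hs : \sum_(c : 'I_(q ^ t)) (q ^ n - #|[set x | f x == c]| * q ^ t) = 0.
    rewrite sumnB; last by move=> c _; apply: hb.
    by rewrite -big_distrl /= sum_classes sum_nat_const card_ord mulnC subnn.
  have he : forall c, #|[set x | f x == c]| * q ^ t = q ^ n.
    move=> c; move/eqP: hs; rewrite sum_nat_eq0 => /forallP /(_ c) /=.
    by move: (hb c) => h; rewrite subn_eq0 => h'; apply/eqP; rewrite eqn_leq h h'.
  apply/eqP; rewrite -(eqn_pmul2r tpos) he.
  by rewrite he.
Qed.
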